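(* Let $G$ be a strongly regular graph with complement $\overline{G}$. Then $G$ is $2$-e.c. if and only if both $G$ and $\overline{G}$ are connected and both $G$ and $\overline{G}$ contain a triangle.
   Context: A graph $G$ with vertex set $V$ is $n$-e.c. if for every pair of disjoint subsets $A,B\subseteq V$ with $|A\cup B|=n$ (either may be empty) there is a vertex $z\notin A\cup B$ adjacent to every vertex of $A$ and to no vertex of $B$. A strongly regular graph with parameters $(v,k,\lambda,\mu)$ is a $k$-regular graph on $v$ vertices in which every pair of adjacent vertices has exactly $\lambda$ common neighbours and every pair of distinct nonadjacent vertices has exactly $\mu$ common neighbours; it is required to have at least one edge and at least one pair of distinct nonadjacent vertices. *)

(* Defs.v *)
From mathcomp Require Import all_boot.
Set Implicit Arguments. Unset Strict Implicit. Unset Printing Implicit Defensive.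

Definition simple_graph (T : finType) (e : rel T) : Prop :=
  symmetric e /\ irreflexive e.

Definition compl_rel (T : finType) (e : rel T) : rel T :=
  fun x y => (x != y) && ~~ e x y.

Definition nbhd (T : finType) (e : rel T) (x : T) : {set T} := [set y | e x y].

Definition srg (T : finType) (e : rel T) (v k lam mu : nat) : Prop :=
  [/\ #|T| = v,
      (forall x, #|nbhd e x| = k),
      (forall x y, e x y -> #|nbhd e x :&: nbhd e y| = lam),
      (forall x y, x != y -> ~~ e x y -> #|nbhd e x :&: nbhd e y| = mu) &
      ((exists x y, e x y) /\ (exists x y, (x != y) && ~~ e x y))].

Definition strongly_regular (T : finType) (e : rel T) : Prop :=
  exists v k lam mu, srg e v k lam mu.

Definition n_ec (T : finType) (e : rel T) (n : nat) : Prop :=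
  forall A B : {set T}, [disjoint A & B] -> #|A :|: B| = n ->
    exists z, z \notin A :|: B /\
      (forall a, a \in A -> e z a) /\ (forall b, b \in B -> ~~ e z b).

Definition connected (T : finType) (e : rel T) : Prop :=
  forall x y : T, connect e x y.

Definition has_triangle (T : finType) (e : rel T) : Prop :=
  exists x y z : T, [&& e x y, e y z & e x z].

(* Main.v *)
Require Import Defs.
From mathcomp Require Import all_boot.
From Stdlib Require Import Lia.
Set Implicit Arguments. Unset Strict Implicit. Unset Printing Implicit Defensive.

Section S.
Variables (T : finType) (e : rel T).
Hypothesis (esym : symmetric e) (eirr : irreflexive e).

Definition Sab (a b : bool) (x y : T) : {set T} :=
  [set z | [&& z != x, z != y, e x z == a & e y z == b]].

Lemma S11E x y : Sab true true x y = nbhd e x :&: nbhd e y.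
Proof. apply/setP => z;
  have hx : e x z -> z != x by apply: contraTneq => ->; rewrite eirr.
  have hy : e y z -> z != y by apply: contraTneq => ->; rewrite eirr.
  rewrite !inE ?negb_or !eqb_id;
  case Hx: (e x z); case Hy: (e y z); rewrite ?andbF ?andbT ?andFb ?andTb ?(hx Hx) ?(hy Hy) ?andbT ?andTb //=. Qed.

Lemma E1 x y : #|Sab true false x y| + #|Sab true true x y| + e x y = #|nbhd e x|.
Proof.
rewrite (cardsD1 y (nbhd e x)) inE -(cardsID (nbhd e y) (nbhd e x :\ y)).
have -> : (nbhd e x :\ y) :&: nbhd e y = Sab true true x y.
  apply/setP => z;
  have hx : e x z -> z != x by apply: contraTneq => ->; rewrite eirr.
  have hy : e y z -> z != y by apply: contraTneq => ->; rewrite eirr.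
  rewrite !inE ?negb_or !eqb_id;
  case Hx: (e x z); case Hy: (e y z); rewrite ?andbF ?andbT ?andFb ?andTb ?(hx Hx) ?(hy Hy) ?andbT ?andTb //=.
have -> : (nbhd e x :\ y) :\: nbhd e y = Sab true false x y.
  apply/setP => z;
  have hx : e x z -> z != x by apply: contraTneq => ->; rewrite eirr.
  have hy : e y z -> z != y by apply: contraTneq => ->; rewrite eirr.
  rewrite !inE ?negb_or !eqb_id;
  case Hx: (e x z); case Hy: (e y z); rewrite ?andbF ?andbT ?andFb ?andTb ?(hx Hx) ?(hy Hy) ?andbT ?andTb //=.
rewrite addnC; congr (_ + _); exact: addnC.
Qed.

Lemma Sswap a b x y : Sab a b x y = Sab b a y x.
Proof. by apply/setP => z; rewrite !inE; case: (z != x); case: (z != y); case: (e x z == a); case: (e y z == b). Qed.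

Lemma E0 x y : x != y ->
  #|Sab false false x y| + #|Sab false true x y| + #|Sab true false x y|
  + #|Sab true true x y| + 2 = #|T|.
Proof.
move=> nxy.
rewrite -(cardsC [set x; y]) cards2 nxy.
rewrite -(cardsID (nbhd e x) (~: [set x; y])).
rewrite -(cardsID (nbhd e y) (~: [set x; y] :&: nbhd e x)).
rewrite -(cardsID (nbhd e y) (~: [set x; y] :\: nbhd e x)).
have F : forall a b A, A = Sab a b x y -> #|A| = #|Sab a b x y| by move=> ? ? ? ->.
rewrite (F true true ((~: [set x; y] :&: nbhd e x) :&: nbhd e y)); last first.
  by apply/setP => z; rewrite !inE negb_or; case: (e x z); case: (e y z); rewrite /= ?andbF ?andbT.
rewrite (F true false ((~: [set x; y] :&: nbhd e x) :\: nbhd e y)); last first.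
  by apply/setP => z; rewrite !inE negb_or; case: (e x z); case: (e y z); rewrite /= ?andbF ?andbT.
rewrite (F false true ((~: [set x; y] :\: nbhd e x) :&: nbhd e y)); last first.
  by apply/setP => z; rewrite !inE negb_or; case: (e x z); case: (e y z); rewrite /= ?andbF ?andbT.
rewrite (F false false ((~: [set x; y] :\: nbhd e x) :\: nbhd e y)); last first.
  by apply/setP => z; rewrite !inE negb_or; case: (e x z); case: (e y z); rewrite /= ?andbF ?andbT.
set a1 := #|Sab false false x y|; set a2 := #|Sab false true x y|.
set a3 := #|Sab true false x y|; set a4 := #|Sab true true x y|.
clearbody a1 a2 a3 a4; rewrite -!plusE /=; lia.
Qed.


Variables (k lam mu : nat).
Hypotheses (Hk : forall x, #|nbhd e x| = k)
  (Hlam : forall x y, e x y -> #|nbhd e x :&: nbhd e y| = lam)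
  (Hmu : forall x y, x != y -> ~~ e x y -> #|nbhd e x :&: nbhd e y| = mu).

Lemma Sinv a b x y x' y' : x != y -> x' != y' -> e x y = e x' y' ->
  #|Sab a b x y| = #|Sab a b x' y'|.
Proof.
move=> nxy nxy' exy.
have E11 : #|Sab true true x y| = #|Sab true true x' y'|.
  rewrite !S11E; case Exy: (e x y).
    by rewrite !Hlam // -exy.
  by rewrite !Hmu // ?Exy // -exy Exy.
have E1a := E1 x y; have E1b := E1 x' y'.
have E2a := E1 y x; have E2b := E1 y' x'.
rewrite -Sswap -(Sswap true true) (esym y x) in E2a.
rewrite -Sswap -(Sswap true true) (esym y' x') in E2b.
have E0a := E0 nxy; have E0b := E0 nxy'.
rewrite !Hk -exy in E1a E1b E2a E2b.
case: a; case: b; move: E11 E1a E1b E2a E2b E0a E0b.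
set a1 := #|Sab false false x y|; set a2 := #|Sab false true x y|.
set a3 := #|Sab true false x y|; set a4 := #|Sab true true x y|.
set b1 := #|Sab false false x' y'|; set b2 := #|Sab false true x' y'|.
set b3 := #|Sab true false x' y'|; set b4 := #|Sab true true x' y'|.
set c := nat_of_bool (e x y).
clearbody a1 a2 a3 a4 b1 b2 b3 b4 c.
all: rewrite -!plusE => *; lia.
Qed.

Lemma inSab a b x y z : z != x -> z != y -> e x z = a -> e y z = b -> z \in Sab a b x y.
Proof. by rewrite inE => -> -> -> ->; rewrite !eqxx. Qed.

Lemma connect_escape (r : rel T) (S : {set T}) u w :
  connect r u w -> u \in S -> w \notin S -> exists a b, [/\ a \in S, b \notin S & r a b].
Proof.
move/connectP=> [p pth ->]; elim: p u pth => [|v p IH] u /=.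
  by move=> _ ->.
move/andP=> [ruv pth] uS wS.
case vS: (v \in S); first exact: IH pth vS wS.
by exists u, v; rewrite vS.
Qed.

Lemma w11 u w : connected e -> u != w -> ~~ e u w ->
  exists u b a, [/\ u != b, ~~ e u b, e u a & e b a].
Proof.
move=> con nuw euw.
have [||a [b [aS bS rab]]] := connect_escape (S := u |: nbhd e u) (con u w).
- by rewrite !inE eqxx.
- by rewrite !inE negb_or eq_sym nuw.
move: aS bS rab; rewrite !inE negb_or => /orP [/eqP ->|eua] /andP [nbu nub] rab.
  by rewrite rab in nub.
exists u, b, a; split => //; first by rewrite eq_sym.
by rewrite esym.
Qed.

Lemma w00 u w : connected (compl_rel e) -> e u w ->
  exists u b a, [/\ e u b, ~~ e u a, ~~ e b a, a != u & a != b].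
Proof.
move=> con euw.
have nuw : u != w by apply: contraTneq euw => ->; rewrite eirr.
have [||a [b [aS bS rab]]] := connect_escape (S := u |: [set z | compl_rel e u z]) (con u w).
- by rewrite !inE eqxx.
- by rewrite !inE negb_or eq_sym nuw /compl_rel nuw euw.
move: aS bS rab; rewrite !inE negb_or /compl_rel => /orP [/eqP ->|/andP [nua eua]] /andP [nbu].
  by move=> /negP nub /andP [? ?]; case: nub; apply/andP.
rewrite negb_and negbK eq_sym (negbTE nbu) /= => eub /andP [nab eab].
rewrite negbK in eub.
exists u, b, a; split => //; first by rewrite esym.
  by rewrite eq_sym.
Qed.

Lemma ne_of s t : e s t -> s != t.
Proof. by apply: contraTneq => ->; rewrite eirr. Qed.

Lemma wit a b x y : connected e -> connected (compl_rel e) -> has_triangle e ->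
  has_triangle (compl_rel e) -> (exists x y, e x y) ->
  (exists x y, (x != y) && ~~ e x y) -> x != y -> exists z, z \in Sab a b x y.
Proof.
move=> con conc [p [q [r /and3P [epq eqr epr]]]] [p' [q' [r' /and3P [cpq cqr cpr]]]]
  [u2 [w2 euw2]] [u1 [w1 /andP [nuw1 euw1]]] nxy.
have [u1' [b1 [a1 [nub1 eub1 eua1 eba1]]]] := w11 con nuw1 euw1.
have [u2' [b2 [a2 [eub2 eua2 eba2 nau2 nab2]]]] := w00 conc euw2.
move: cpq cqr cpr; rewrite /compl_rel => /andP [npq' epq'] /andP [nqr' eqr'] /andP [npr' epr'].
have Wtf : forall c, exists x0 y0 z, [/\ x0 != y0, e x0 y0 = c & z \in Sab true false x0 y0].
  case.
    exists a1, u1', b1; split.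
    - by rewrite eq_sym (ne_of eua1).
    - by rewrite esym.
    apply: inSab.
    - exact: ne_of eba1.
    - by rewrite eq_sym.
    - by rewrite esym.
    - exact: negbTE.
  exists u2', a2, b2; split.
  - by rewrite eq_sym.
  - exact: negbTE.
  apply: inSab.
  - by rewrite eq_sym (ne_of eub2).
  - by rewrite eq_sym.
  - exact: eub2.
  - by rewrite esym; exact: negbTE.
have W : forall a b c, exists x0 y0 z, [/\ x0 != y0, e x0 y0 = c & z \in Sab a b x0 y0].
  move=> [] [] [].
  - exists p, q, r; split; first exact: ne_of epq. by [].
    apply: inSab => //.
    - by rewrite eq_sym (ne_of epr).
    - by rewrite eq_sym (ne_of eqr).
  - exists u1', b1, a1; split => //; first exact: negbTE.
    apply: inSab => //.
    - by rewrite eq_sym (ne_of eua1).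
    - by rewrite eq_sym (ne_of eba1).
  - exact: Wtf.
  - exact: Wtf.
  - have [x0 [y0 [z [n0 E0 Z]]]] := Wtf true.
    by exists y0, x0, z; rewrite -Sswap esym eq_sym.
  - have [x0 [y0 [z [n0 E0 Z]]]] := Wtf false.
    by exists y0, x0, z; rewrite -Sswap esym eq_sym.
  - exists u2', b2, a2; split => //; first exact: ne_of eub2.
    apply: inSab => //; exact: negbTE.
  - exists p', q', r'; split => //; first exact: negbTE.
    apply: inSab.
    - by rewrite eq_sym.
    - by rewrite eq_sym.
    - exact: negbTE.
    - exact: negbTE.
have [x0 [y0 [z [n0 E Z]]]] := W a b (e x y).
apply/card_gt0P; rewrite (Sinv a b nxy n0 (sym_eq E)).
by apply/card_gt0P; exists z.
Qed.

End S.

Theorem mainTheorem2 (T : finType) (e : rel T) :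
  simple_graph e -> strongly_regular e ->
  (n_ec e 2 <->
   [/\ connected e, connected (compl_rel e),
       has_triangle e & has_triangle (compl_rel e)]).
Proof.
move=> [esy irr] [v [k [lam [mu [HT Hk Hlam Hmu [ed ned]]]]]].
split.
- move=> H.
  have com : forall x y, x != y -> exists z, [/\ z != x, z != y, e z x & e z y].
    move=> x y nxy; have [||z [zn [zA zB]]] := H [set x; y] set0.
    + by rewrite -setI_eq0 setI0.
    + by rewrite setU0 cards2 nxy.
    exists z; move: zn; rewrite setU0 !inE negb_or => /andP [-> ->]; split => //;
      apply: zA; rewrite !inE eqxx ?orbT //.
  have ncom : forall x y, x != y -> exists z, [/\ z != x, z != y, ~~ e z x & ~~ e z y].
    move=> x y nxy; have [||z [zn [zA zB]]] := H set0 [set x; y].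
    + by rewrite -setI_eq0 set0I.
    + by rewrite set0U cards2 nxy.
    exists z; move: zn; rewrite set0U !inE negb_or => /andP [-> ->]; split => //;
      apply: zB; rewrite !inE eqxx ?orbT //.
  split.
  + move=> x y; case: (eqVneq x y) => [->|nxy]; first exact: connect0.
    case exy: (e x y); first exact: connect1.
    have [z [_ _ ezx ezy]] := com x y nxy.
    apply: (@connect_trans _ _ z x y); apply: connect1; by rewrite // esy.
  + move=> x y; case: (eqVneq x y) => [->|nxy]; first exact: connect0.
    have [z [nzx nzy ezx ezy]] := ncom x y nxy.
    apply: (@connect_trans _ _ z x y); apply: connect1.
      by rewrite /compl_rel eq_sym nzx esy ezx.
    by rewrite /compl_rel nzy ezy.
  + have [x [y exy]] := ed.
    have nxy : x != y by apply: contraTneq exy => ->; rewrite irr.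
    have [z [_ _ ezx ezy]] := com x y nxy.
    by exists x, y, z; rewrite exy -!(esy z) ezx ezy.
  + have [x [y /andP [nxy exy]]] := ned.
    have [z [nzx nzy ezx ezy]] := ncom x y nxy.
    exists x, y, z; rewrite /compl_rel nxy exy -!(esy z) ezx ezy /=.
    by rewrite !(eq_sym _ z) nzx nzy.
- move=> [con conc tri tric] A B dAB cAB.
  have /cards2P [x [y [nxy AB]]] : #|A :|: B| == 2 by rewrite cAB.
  have [z] := wit esy irr Hk Hlam Hmu (x \in A) (y \in A) con conc tri tric ed ned nxy.
  rewrite inE => /and4P [nzx nzy /eqP ex /eqP ey].
  exists z; split; first by rewrite AB !inE negb_or nzx nzy.
  split.
  + move=> t tA; have : t \in A :|: B by rewrite inE tA.
    rewrite AB !inE => /orP [/eqP Et|/eqP Et]; subst t; by rewrite esy ?ex ?ey.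
  + move=> t tB; have : t \in A :|: B by rewrite inE tB orbT.
    rewrite AB !inE => /orP [/eqP Et|/eqP Et]; subst t;
      by rewrite esy ?ex ?ey (disjointFl dAB tB).
Qed.
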